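(* Let $\mathcal{A}_1$ and $\mathcal{A}_2$ be (unital, associative) algebras over a field $\mathbb{K}$ and let $\Phi\colon\mathcal{A}_1\to\mathcal{A}_2$ be a surjective algebra homomorphism such that $\ker(\Phi)$ is spanned as a $\mathbb{K}$-vector space by an idempotent $e$. If $\mathcal{A}_2$ is semisimple, then $\mathcal{A}_1$ is semisimple. *)

(* Defs.v *)
From mathcomp Require Import all_boot all_algebra.
Set Implicit Arguments. Unset Strict Implicit. Unset Printing Implicit Defensive.
Import GRing.Theory.
Local Open Scope ring_scope.

(* A left ideal of an algebra A: an additive subgroup stable under
   left multiplication (closure under opposites and scalars follows,
   since -x = (-1) * x and c *: x = c%:A * x). *)
Definition left_ideal (K : fieldType) (A : algType K) (I : A -> Prop) : Prop :=
  [/\ I 0, (forall x y, I x -> I y -> I (x + y)) & (forall a x, I x -> I (a * x))].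

(* A is semisimple: the left regular module A is semisimple, i.e. every
   left ideal (submodule of the regular module) is a direct summand. *)
Definition semisimple (K : fieldType) (A : algType K) : Prop :=
  forall I : A -> Prop, left_ideal I ->
    exists J : A -> Prop, [/\ left_ideal J,
      (forall x, I x -> J x -> x = 0) &
      (forall x, exists y z, [/\ I y, J z & x = y + z])].

(* Main.v *)
Require Import Defs.
From mathcomp Require Import all_boot all_algebra.
From Stdlib Require Import Classical_Prop.
Import GRing.Theory.
Local Open Scope ring_scope.

Theorem proposition4p7 (K : fieldType) (A1 A2 : algType K)
    (Phi : {lrmorphism A1 -> A2}) (e : A1) :
  (forall y : A2, exists x : A1, Phi x = y) ->
  e * e = e ->
  (forall x : A1, Phi x = 0 <-> exists c : K, x = c *: e) ->
  semisimple A2 -> semisimple A1.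
Proof.
move=> surj ee ker ss2 I [I0 Iadd IM].
have IZ : forall (c : K) x, I x -> I (c *: x) by move=> c x Ix; rewrite -mulr_algl; apply: (IM).
have PM : forall a b, Phi (a * b) = Phi a * Phi b by move=> a b; exact: rmorphM.
have PD : forall a b, Phi (a + b) = Phi a + Phi b by move=> a b; exact: rmorphD.
have PB : forall a b, Phi (a - b) = Phi a - Phi b by move=> a b; exact: rmorphB.
have PZ : forall (c : K) a, Phi (c *: a) = c *: Phi a by move=> c a; exact: linearZ.
have P0 : Phi 0 = 0 by exact: rmorph0.
have Phie : Phi e = 0 by apply/ker; exists 1; rewrite scale1r.
pose I2 := fun y : A2 => exists x, I x /\ Phi x = y.
have [|J2 [[J0 JD JM] Hint Hsum]] := ss2 I2.
  split.
  - by exists 0; rewrite P0.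
  - by move=> _ _ [a [Ia <-]] [b [Ib <-]]; exists (a + b); rewrite PD; split => //; apply: (Iadd).
  - move=> a _ [b [Ib <-]]; have [a' <-] := surj a.
    by exists (a' * b); rewrite PM; split => //; apply: (IM).
exists (fun z => J2 (Phi z) /\ (I e -> z * e = 0)); split.
- split.
  + by rewrite P0; split => // _; rewrite mul0r.
  + move=> x y [Jx Hx] [Jy Hy]; rewrite PD; split; first exact: (JD).
    by move=> Ie; rewrite mulrDl Hx // Hy // addr0.
  + move=> a x [Jx Hx]; rewrite PM; split; first exact: (JM).
    by move=> Ie; rewrite -mulrA Hx // mulr0.
- move=> x Ix [Jx Hx].
  have Px0 : Phi x = 0 by apply: (Hint) => //; exists x.
  have [c xe] := (ker x).1 Px0.
  have [c0|cn0] := eqVneq c 0; first by rewrite xe c0 scale0r.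
  have Ie : I e.
    have := IZ c^-1 _ Ix; rewrite xe scalerA mulVf // scale1r //.
  by rewrite -(Hx Ie) xe -scalerAl ee.
- move=> x.
  have [y0 [z2 [[y1 [Iy1 <-]] Jz2 Hx]]] := Hsum (Phi x).
  have [z0 Hz0] := surj z2.
  have [c Hc] : exists c, x - y1 - z0 = c *: e.
    apply/ker; rewrite !PB -addrA -opprD; apply/eqP; rewrite subr_eq0; apply/eqP; exact: (etrans Hx (congr1 (fun t => _ + t) (esym Hz0))).
  have Hxx : x = y1 + z0 + c *: e by rewrite -Hc addrAC -addrA subrK addrC subrK.
  case: (classic (I e)) => Ie.
  + have [d Hd] : exists d, z0 * e = d *: e.
      by apply/ker; rewrite PM Phie mulr0.
    exists (y1 + c *: e + z0 * e), (z0 - z0 * e); split.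
    * apply: (Iadd); first exact: (Iadd _ _ Iy1 (IZ c e Ie)).
      by rewrite Hd; exact: (IZ).
    * split; first by rewrite PB PM Phie mulr0 subr0 Hz0.
      by move=> _; rewrite mulrBl -mulrA ee subrr.
    * by rewrite Hxx addrAC -!addrA; congr (_ + (_ + _)); rewrite addrCA subrr addr0.
  + exists y1, (z0 + c *: e); split => //.
    * by rewrite PD PZ Phie scaler0 addr0 Hz0.
    * by rewrite addrA.
Qed.
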